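(* For integers $n\ge1$ and $1\le k\le n$ define $X^{n,k}(z,\bar z)=\frac{1}{k!}\frac{\partial^{k-1}}{\partial z^{k-1}}\big[z^{n-k}(1-z\bar z)^k\big]$ ($z,\bar z$ treated as independent variables). Then $$\frac{\partial X^{n,k}}{\partial z}=Z^{n,k},\qquad \frac{\partial X^{n,k}}{\partial \bar z}=-Z^{n,k-1},\qquad X^{n,k}=\frac1k\big(Z^{n-1,k-1}-\bar z\,Z^{n,k-1}\big),$$ and $X^{n,k}(t,\bar t)=0$ for all $|t|=1$.
   Context: Identify $\mathbb R^2$ with $\mathbb C$ via $z=x^1+ix^2$, $\bar z=x^1-ix^2$, with Wirtinger derivatives $\frac{\partial}{\partial z}=\frac12\big(\frac{\partial}{\partial x^1}-i\frac{\partial}{\partial x^2}\big)$, $\frac{\partial}{\partial \bar z}=\frac12\big(\frac{\partial}{\partial x^1}+i\frac{\partial}{\partial x^2}\big)$. Zernike polynomials (in the paper's numbering) are defined for integers $n\ge 0$, $0\le k\le n$ by $$Z^{n,k}(z,\bar z)=\sum_{s=0}^{k}\binom{k}{s}\binom{n-k}{s}z^{n-k-s}(1-z\bar z)^s(-\bar z)^{k-s}\quad\text{for }0\le k\le [n/2],$$ and $Z^{n,k}=(-1)^n\,\overline{Z^{n,n-k}}$ for $[n/2]<k\le n$, where $[\cdot]$ is the integer part. *)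

(* Defs.v *)
(* Polynomials in two independent commuting variables z, zbar
   over a numeric algebraically closed field C (e.g. the complex numbers),
   represented as {poly {poly C}}: the outer variable is z, the inner one zbar. *)
From HB Require Import structures.
From mathcomp Require Import all_boot all_order all_algebra.
Set Implicit Arguments. Unset Strict Implicit. Unset Printing Implicit Defensive.
Import Order.TTheory GRing.Theory Num.Theory.
Local Open Scope ring_scope.

Section Zernike.
Variable C : numClosedFieldType.

Definition zv : {poly {poly C}} := 'X.
Definition zbv : {poly {poly C}} := ('X : {poly C})%:P.

Definition dz (p : {poly {poly C}}) : {poly {poly C}} := p^`().
Definition dzb (p : {poly {poly C}}) : {poly {poly C}} :=
  map_poly (fun q : {poly C} => q^`()) p.

Definition conjP (p : {poly {poly C}}) : {poly {poly C}} :=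
  swapXY (map_poly (map_poly Num.conj) p).

Definition eval2 (p : {poly {poly C}}) (x y : C) : C :=
  (map_poly (fun q : {poly C} => q.[y]) p).[x].

Definition Zsum (n k : nat) : {poly {poly C}} :=
  \sum_(s < k.+1) ('C(k, s) * 'C(n - k, s))%:R
      * zv ^+ (n - k - s) * (1 - zv * zbv) ^+ s * (- zbv) ^+ (k - s).

Definition Zern (n k : nat) : {poly {poly C}} :=
  if (k <= n./2)%N then Zsum n k
  else (-1) ^+ n * conjP (Zsum n (n - k)).

Definition Xpol (n k : nat) : {poly {poly C}} :=
  ((k`!)%:R^-1 : C)%:P%:P * (zv ^+ (n - k) * (1 - zv * zbv) ^+ k)^`(k.-1).

End Zernike.

(* Main.v *)
Require Import Defs.
From HB Require Import structures.
From mathcomp Require Import all_boot all_order all_algebra.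
From mathcomp Require Import ring zify.
Import Order.TTheory GRing.Theory Num.Theory.
Local Open Scope ring_scope.

Section Leib.
Variable R : comNzRingType.
Implicit Types p q : {poly R}.

Lemma leibniz p q n :
  (p * q)^`(n) = \sum_(i < n.+1) (p^`(n - i) * q^`(i)) *+ 'C(n, i).
Proof.
elim: n => [|n IHn]; first by rewrite big_ord1.
rewrite derivnS IHn raddf_sum /=.
set T := fun i : nat => p^`(n.+1 - i) * q^`(i).
transitivity (\sum_(i < n.+1) (T i + T i.+1) *+ 'C(n, i)).
  apply: eq_bigr => i _; rewrite derivMn derivM -!derivnS /T subSn //.
  by rewrite -ltnS.
transitivity (\sum_(i < n.+2) T i *+ 'C(n.+1, i)); last by [].
under eq_bigr do rewrite mulrnDl.
rewrite big_split /= [in RHS]big_ord_recl /=.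
under [in RHS]eq_bigr do rewrite binS mulrnDr.
rewrite big_split /= big_ord_recl /= addrA; congr (_ + _ + _).
  by rewrite !bin0.
rewrite [in RHS]big_ord_recr /= bin_small // mulr0n addr0.
by apply: eq_bigr => i _.
Qed.

Lemma comm_aux (N Z Pp W e1 e2 en : R) : en * e2 = e1 ->
  N * Z * Pp * (e1 * W) = en * (N * W * Pp * (e2 * Z)).
Proof. by move=> <-; ring. Qed.

Lemma final_aux (X Y c1 c2 en : R) (e1 e2 s : nat) : en * (-1) ^+ e1 = (-1) ^+ e2 ->
  c1 * c2 * X ^+ e1 * (1 - X * Y) ^+ s * (- Y) ^+ e2 =
  en * (c2 * c1 * Y ^+ e2 * (1 - Y * X) ^+ s * (- X) ^+ e1).
Proof.
move=> h; rewrite (exprNn Y) (exprNn X) -h [Y * X]mulrC.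
move: ((-1) ^+ e1) (X ^+ e1) (Y ^+ e2) ((1 - X * Y) ^+ s) => a b c d; ring.
Qed.

Lemma sign_aux n k s : (k <= n)%N -> (s <= k)%N -> (s <= n - k)%N ->
  (-1) ^+ n * (-1) ^+ (n - k - s) = (-1) ^+ (k - s) :> R.
Proof.
move=> kn sk sm; rewrite -exprD -signr_odd -[RHS]signr_odd.
have -> : (n + (n - k - s) = (k - s) + (n - k).*2)%N by rewrite -addnn; lia.
by rewrite oddD odd_double addbF.
Qed.

Lemma step_aux (Pd Pj H Hd Pp : R) m :
  Pd * Pj *+ m * H + Pp * Pj * Hd = Pj * (Pd * H *+ m + Pp * Hd).
Proof. rewrite -(mulr_natr (Pd * Pj)) -(mulr_natr (Pd * H)); ring. Qed.

Lemma split_aux (Z W : R) m j :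
  Z ^+ m * (1 - Z * W) ^+ j.+1 =
  Z ^+ m * (1 - Z * W) ^+ j - W * (Z ^+ m.+1 * (1 - Z * W) ^+ j).
Proof. rewrite exprS exprSr; move: (Z ^+ m) ((1 - Z * W) ^+ j) => a b; ring. Qed.

Lemma widen_sum (f : nat -> R) a N : (a <= N)%N ->
  (forall s, (a < s)%N -> f s = 0) ->
  \sum_(s < a.+1) f s = \sum_(s < N.+1) f s.
Proof.
move=> aN f0; rewrite (big_ord_widen N.+1 f) // big_mkcond.
apply: eq_bigr => i _; case: ifP => // /negbT; rewrite -leqNgt => h.
by rewrite f0.
Qed.
End Leib.

Section Main.
Variable C : numClosedFieldType.
Local Notation PP := {poly {poly C}}.
Local Notation z := (zv C).
Local Notation w := (zbv C).
Local Notation P := (1 - zv C * zbv C).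

Lemma derivn_mulC (c : {poly C}) (p : PP) j : (c%:P * p)^`(j) = c%:P * p^`(j).
Proof. by elim: j => [|j IH]; rewrite ?derivn0 // !derivnS IH deriv_mulC. Qed.

Lemma derivP : P^`() = - w.
Proof.
by rewrite derivB derivC derivM /zv /zbv derivX derivC mulr0 addr0 mul1r sub0r.
Qed.

Lemma derivw_exp i : ((- w) ^+ i)^`() = 0.
Proof. by rewrite /zbv -rmorphN -rmorphXn derivC. Qed.

Lemma derivnP i k : (P ^+ k)^`(i) = (- w) ^+ i * P ^+ (k - i) *+ k ^_ i.
Proof.
elim: i => [|i IH]; first by rewrite derivn0 expr0 mul1r subn0.
rewrite derivnS IH derivMn derivM derivw_exp mul0r add0r deriv_exp derivP.
rewrite ffactnSr subnS exprS mulrnA.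
move: ((- w) ^+ i) (- w) (P ^+ (k - i).-1) => a b c.
by rewrite mulrnAr mulrnAC mulrA -exprSr exprS.
Qed.

Lemma natid (m k s : nat) : (s <= k)%N ->
  (m ^_ s * k ^_ (k - s) * 'C(k, k - s) = 'C(k, s) * 'C(m, s) * k`!)%N.
Proof.
move=> sk; rewrite bin_sub //.
apply/eqP; rewrite -(eqn_pmul2r (fact_gt0 s)); apply/eqP.
have h2 : (k ^_ (k - s) * s`! = k`!)%N by rewrite -{2}(subKn sk) ffact_fact ?leq_subr.
rewrite -bin_ffact -h2; ring.
Qed.

Lemma Rod n k : (z ^+ (n - k) * P ^+ k)^`(k) = Zsum C n k *+ k`!.
Proof.
rewrite leibniz /Zsum -sumrMnl (reindex_inj rev_ord_inj) /=.
apply: eq_bigr => s _.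
have sk : (s <= k)%N by rewrite -ltnS.
rewrite subSS subKn // /zv derivnXn derivnP subKn //.
move: ('X ^+ (n - k - s)) ((- w) ^+ (k - s)) (P ^+ s) => a b c.
rewrite !mulrnAl !mulrnAr -!mulrnA mulrA mulrAC; congr (_ *+ _).
  by rewrite mul1r.
by rewrite -(natid (n - k) k s sk); ring.
Qed.

Lemma conjZsum n j : conjP (Zsum C n j) = swapXY (Zsum C n j).
Proof.
rewrite /conjP; congr swapXY; rewrite /Zsum rmorph_sum; apply: eq_bigr => s _.
rewrite !(rmorphM, rmorphXn, rmorphB, rmorphN, rmorph1, rmorph_nat).
rewrite /zv /zbv /=. rewrite !map_polyX map_polyC /= map_polyX.
done.
Qed.

Lemma Zsum_sym n k : (k <= n)%N ->
  Zsum C n k = (-1) ^+ n * swapXY (Zsum C n (n - k)).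
Proof.
move=> kn; rewrite /Zsum rmorph_sum mulr_sumr subKn //.
pose f1 := fun s : nat => ('C(k, s) * 'C(n - k, s))%:R * z ^+ (n - k - s) * P ^+ s *
     (- w) ^+ (k - s).
pose f2 := fun s : nat => (-1) ^+ n * swapXY (('C(n - k, s) * 'C(k, s))%:R * z ^+ (k - s) * P ^+ s *
        (- w) ^+ (n - k - s)).
change (\sum_(s < k.+1) f1 s = \sum_(s < (n - k).+1) f2 s).
rewrite (@widen_sum _ f1 _ _ kn); last first.
  by move=> s ks; rewrite /f1 bin_small // !(mul0r, mulr0, rmorph0).
rewrite (@widen_sum _ f2 _ _ (leq_subr k n)); last first.
  by move=> s ks; rewrite /f2 bin_small // !(mul0r, mulr0, rmorph0).
apply: eq_bigr => s _; rewrite /f1 /f2.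
case: (leqP s k) => sk; last first. rewrite (bin_small sk) !(mul0r, mulr0, rmorph0, mul0n, muln0). reflexivity.
case: (leqP s (n - k)) => sm; last first. rewrite (bin_small sm) !(mul0r, mulr0, rmorph0, mul0n, muln0). reflexivity.
rewrite !(rmorphM, rmorphXn, rmorphB, rmorphN, rmorph1, rmorph_nat).
rewrite /zv /zbv /= swapXY_X swapXY_Y.
apply: (@final_aux _ 'X 'Y). exact: (@sign_aux _ _ _ _ kn sk sm).
Qed.

Lemma Zern_sum n k : (k <= n)%N -> Zern C n k = Zsum C n k.
Proof.
move=> kn; rewrite /Zern; case: ifP => // _.
by rewrite conjZsum -Zsum_sym.
Qed.

Lemma fact_neq0 m : ((m`!)%:R : C) != 0.
Proof. by rewrite pnatr_eq0 -lt0n fact_gt0. Qed.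

Lemma cancel_fact (p : PP) m : ((m`!)%:R^-1 : C)%:P%:P * (p *+ m`!) = p.
Proof.
by rewrite mulrnAr -mulrnAl -!polyCMn -(mulr_natr (_^-1)) mulVf ?fact_neq0 // mul1r.
Qed.

Lemma cancel_factS (p : PP) m :
  ((m.+1`!)%:R^-1 : C)%:P%:P * (p *+ m`!) = ((m.+1)%:R^-1 : C)%:P%:P * p.
Proof.
by rewrite mulrnAr -mulrnAl -!polyCMn -(mulr_natr (_^-1)) factS natrM invfM -mulrA mulVf ?mulr1 // fact_neq0.

Qed.

Lemma dzb_swap (p : PP) : dzb p = swapXY ((swapXY p)^`()).
Proof.
apply/polyP => i; apply/polyP => j.
rewrite coef_swapXY /dzb coef_map /= !coef_deriv coefMn coef_swapXY.
by [].
Qed.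

Lemma dzb_derivn (p : PP) j : dzb (p^`(j)) = (dzb p)^`(j).
Proof.
elim: j => [|j IH]; first by rewrite !derivn0.
rewrite !derivnS -IH; apply/polyP => i.
by rewrite /dzb coef_map /= !coef_deriv coef_map /= derivMn.
Qed.

Lemma dzb_mulC (a : C) (p : PP) : dzb (a%:P%:P * p) = a%:P%:P * dzb p.
Proof.
by rewrite !dzb_swap rmorphM /= swapXY_polyC map_polyC /= deriv_mulC rmorphM
  /= swapXY_polyC map_polyC.
Qed.


Lemma deriv_one : (1 : PP)^`() = 0.
Proof. by rewrite -polyC1 derivC. Qed.

Lemma dzF m j :
  dzb (z ^+ m * P ^+ j.+1) = - (z ^+ m.+1 * P ^+ j) *+ j.+1.
Proof.
rewrite dzb_swap -[RHS]swapXYK; congr swapXY.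
rewrite !(rmorphM, rmorphXn, rmorphB, rmorph1, rmorphMn, rmorphN) /zv /zbv /=.
rewrite swapXY_X swapXY_Y -rmorphXn deriv_mulC deriv_exp derivB deriv_one.
rewrite deriv_mulC derivX /=.
rewrite rmorphXn /= sub0r mulr1 exprSr mulrnAr; congr (_ *+ _).
move: ('Y : PP) ('Y ^+ m : PP) ((1 - 'Y * 'X) ^+ j : PP) => a b c.
by rewrite mulNr mulrN !mulrA.
Qed.

Lemma divPgen (Q : PP) k i : (i <= k)%N ->
  exists H, (Q * P ^+ k)^`(i) = P ^+ (k - i) * H.
Proof.
elim: i => [|i IH] hi; first by exists Q; rewrite derivn0 subn0 mulrC.
rewrite derivnS; have [H ->] := IH (ltnW hi).
rewrite derivM deriv_exp -(subnSK hi) /= exprS.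
exists (P^`() * H *+ (k - i.+1).+1 + P * H^`()).
by rewrite step_aux.
Qed.

Theorem main_thm (n k : nat) :
  (1 <= n)%N -> (1 <= k <= n)%N ->
  [/\ dz (Xpol C n k) = Zern C n k,
      dzb (Xpol C n k) = - Zern C n k.-1,
      Xpol C n k = ((k%:R)^-1 : C)%:P%:P
                     * (Zern C n.-1 k.-1 - zbv C * Zern C n k.-1)
    & forall t : C, `|t| = 1 -> eval2 (Xpol C n k) t (Num.conj t) = 0].
Proof.
case: n => [//|n] _; case: k => [//|k] /= kn.
have kn2 : (k <= n)%N by []. have kn1 : (k <= n.+1)%N by apply: leqW.
rewrite /Xpol /= subSS; split.
- rewrite Zern_sum // ?ltnS /dz deriv_mulC -derivnS -[(n - k)%N]subSS Rod.
  by rewrite cancel_fact.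
- rewrite Zern_sum // dzb_mulC dzb_derivn dzF -subSn // derivnMn derivnN Rod.
  by rewrite mulNrn -mulrnA mulrN mulnC -factS cancel_fact.
- rewrite (@Zern_sum _ _ kn2) (@Zern_sum _ _ kn1).
  rewrite (@split_aux _ z w) derivnB /zbv derivn_mulC -/(zbv C) Rod -subSn // Rod.
  by rewrite mulrnAr -mulrnBl cancel_factS.
- move=> t t1.
  have [H ->] := (@divPgen (z ^+ (n - k)) _ _ (leqnSn k)).
  rewrite subSnn expr1.
  have ev : forall p : PP,
      eval2 p t t^* = horner_eval t (map_poly (horner_eval t^*) p) by [].
  have hP : horner_eval t (map_poly (horner_eval t^*) P) = 0.
    rewrite !(rmorphB, rmorph1, rmorphM) /= /zv /zbv map_polyX map_polyC /=.
    by rewrite !horner_evalE !hornerX hornerC -normCK t1 expr1n subrr.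
  by rewrite ev !rmorphM /= hP mul0r mulr0.
Qed.
End Main.

Theorem mainTheorem4 (C : numClosedFieldType) (n k : nat) :
  (1 <= n)%N -> (1 <= k <= n)%N ->
  [/\ dz (Xpol C n k) = Zern C n k,
      dzb (Xpol C n k) = - Zern C n k.-1,
      Xpol C n k = ((k%:R)^-1 : C)%:P%:P
                     * (Zern C n.-1 k.-1 - zbv C * Zern C n k.-1)
    & forall t : C, `|t| = 1 -> eval2 (Xpol C n k) t (Num.conj t) = 0].
Proof. exact: main_thm. Qed.
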